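(* Let $H:[0,1]\times\mathbb R\to\mathbb R$ be continuous, coercive in $p$, and quasiconvex in $p$ with $\mathrm{Int}\{p: H(s,p)\le b\}=\{p:H(s,p)<b\}$ for all $s\in[0,1]$, $b\in\mathbb R$. Set $a_H=\max_{s\in[0,1]}\min_{p\in\mathbb R}H(s,p)$. Let $a\ge a_H$, and if $a=a_H$ assume in addition that $s\mapsto \min_p H(s,p)$ is constant on $[0,1]$. For $s\in[0,1]$ put $\sigma^+_a(s)=\max\{p: H(s,p)=a\}$ and $\sigma^-_a(s)=\min\{p:H(s,p)=a\}$. Let $\alpha,\beta\in\mathbb R$ satisfy $$\int_0^1\sigma^-_a(t)\,dt\le \beta-\alpha\le\int_0^1\sigma^+_a(t)\,dt .$$ Then the function $$w(s)=\min\Big\{\alpha+\int_0^s\sigma^+_a(t)\,dt,\ \beta-\int_s^1\sigma^-_a(t)\,dt\Big\},\qquad s\in[0,1],$$ is the unique function, continuous on $[0,1]$, which is a viscosity solution of $H(s,u'(s))=a$ in $(0,1)$ and satisfies $u(0)=\alpha$, $u(1)=\beta$.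
   Context: Coercive in $p$ means $H(s,p)\to+\infty$ as $|p|\to\infty$, uniformly in $s\in[0,1]$; quasiconvex in $p$ means that all sublevel sets $\{p:H(s,p)\le b\}$ are convex. Solutions are understood in the viscosity sense. *)

(* Defs.v *)
From Stdlib Require Import Reals Lra ClassicalEpsilon Rtopology.
Open Scope R_scope.

(* Total Riemann integral: RiemannInt of an (arbitrarily chosen) integrability
   proof when f is Riemann integrable on [a,b], and 0 otherwise.
   RiemannInt does not depend on the chosen proof (RiemannInt_P5). *)
Definition Rint (f : R -> R) (a b : R) : R :=
  match excluded_middle_informative (inhabited (Riemann_integrable f a b)) with
  | left h => RiemannInt (epsilon h (fun _ => True))
  | right _ => 0
  end.

Definition cont_on_strip (H : R -> R -> R) : Prop :=
  forall s p, 0 <= s <= 1 -> forall eps, 0 < eps -> exists del, 0 < del /\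
    forall s' p', 0 <= s' <= 1 -> Rabs (s' - s) < del -> Rabs (p' - p) < del ->
      Rabs (H s' p' - H s p) < eps.

Definition coercive (H : R -> R -> R) : Prop :=
  forall M, exists K, forall s p, 0 <= s <= 1 -> K < Rabs p -> M < H s p.

Definition quasiconvex (H : R -> R -> R) : Prop :=
  forall s b p q t, 0 <= s <= 1 -> H s p <= b -> H s q <= b -> 0 <= t <= 1 ->
    H s (t * p + (1 - t) * q) <= b.

Definition is_min_value (f : R -> R) (m : R) : Prop :=
  (exists p, f p = m) /\ forall p, m <= f p.

Definition is_max_on01 (g : R -> R) (M : R) : Prop :=
  (exists s, 0 <= s <= 1 /\ g s = M) /\ forall s, 0 <= s <= 1 -> g s <= M.

Definition is_max_of (A : R -> Prop) (x : R) : Prop := A x /\ forall y, A y -> y <= x.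
Definition is_min_of (A : R -> Prop) (x : R) : Prop := A x /\ forall y, A y -> x <= y.

Definition cont_on01 (u : R -> R) : Prop :=
  forall x, 0 <= x <= 1 -> forall eps, 0 < eps -> exists del, 0 < del /\
    forall y, 0 <= y <= 1 -> Rabs (y - x) < del -> Rabs (u y - u x) < eps.

Definition C1 (phi dphi : R -> R) : Prop :=
  (forall x, derivable_pt_lim phi x (dphi x)) /\ continuity dphi.

Definition loc_max01 (u phi : R -> R) (x : R) : Prop :=
  exists del, 0 < del /\ forall y, 0 < y < 1 -> Rabs (y - x) < del ->
    u y - phi y <= u x - phi x.
Definition loc_min01 (u phi : R -> R) (x : R) : Prop :=
  exists del, 0 < del /\ forall y, 0 < y < 1 -> Rabs (y - x) < del ->
    u x - phi x <= u y - phi y.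

Definition visc_sub (H : R -> R -> R) (a : R) (u : R -> R) : Prop :=
  forall x phi dphi, 0 < x < 1 -> C1 phi dphi -> loc_max01 u phi x ->
    H x (dphi x) <= a.
Definition visc_super (H : R -> R -> R) (a : R) (u : R -> R) : Prop :=
  forall x phi dphi, 0 < x < 1 -> C1 phi dphi -> loc_min01 u phi x ->
    a <= H x (dphi x).
Definition visc_sol (H : R -> R -> R) (a : R) (u : R -> R) : Prop :=
  (forall x, 0 < x < 1 -> continuity_pt u x) /\ visc_sub H a u /\ visc_super H a u.

(* Main.v *)
Require Import Defs.
From Stdlib Require Import Reals.
From Stdlib Require Import Lra Rtopology ClassicalEpsilon.
From Coquelicot Require Import Coquelicot.
Open Scope R_scope.

Lemma cont_pt_intro (f : R -> R) x :
  (forall eps, 0 < eps -> exists del, 0 < del /\ forall y, Rabs (y - x) < del -> Rabs (f y - f x) < eps) ->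
  continuity_pt f x.
Proof.
  intros Hf eps Heps. destruct (Hf eps Heps) as [d [Hd Hy]].
  exists d; split; [lra|]. intros y [_ Hyd]. simpl in *. unfold R_dist in *. now apply Hy.
Qed.

Lemma cont_pt_elim (f : R -> R) x : continuity_pt f x ->
  forall eps, 0 < eps -> exists del, 0 < del /\ forall y, Rabs (y - x) < del -> Rabs (f y - f x) < eps.
Proof.
  intros Hf eps Heps. destruct (Hf eps Heps) as [d [Hd Hy]].
  exists d; split; [lra|]. intros y Hyd.
  destruct (Req_dec x y) as [<-|Hne].
  - unfold Rminus; rewrite Rplus_opp_r, Rabs_R0; lra.
  - apply (Hy y). split; [split; [exact I|exact Hne]|exact Hyd].
Qed.

Ltac rabs := unfold Rabs in *; repeat match goal with
  | |- context [Rcase_abs ?t] => destruct (Rcase_abs t)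
  | H : context [Rcase_abs ?t] |- _ => destruct (Rcase_abs t) end.

Definition clamp (x : R) : R := Rmax 0 (Rmin 1 x).

Lemma clamp_in x : 0 <= clamp x <= 1.
Proof. unfold clamp, Rmax, Rmin; repeat destruct Rle_dec; lra. Qed.

Lemma clamp_id x : 0 <= x <= 1 -> clamp x = x.
Proof. intros; unfold clamp, Rmax, Rmin; repeat destruct Rle_dec; lra. Qed.

Lemma clamp_lip x y : Rabs (clamp y - clamp x) <= Rabs (y - x).
Proof.
  unfold clamp, Rmax, Rmin; repeat destruct Rle_dec; rabs; lra.
Qed.

Definition cE (f : R -> R) x := f (clamp x).

Lemma cE_cont f : cont_on01 f -> forall x, continuity_pt (cE f) x.
Proof.
  intros Hf x. apply cont_pt_intro. intros eps Heps.
  destruct (Hf (clamp x) (clamp_in x) eps Heps) as [d [Hd Hy]].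
  exists d; split; [lra|]. intros y Hyx. unfold cE. apply Hy. apply clamp_in.
  pose proof (clamp_lip x y); lra.
Qed.

Lemma cE_eq f x : 0 <= x <= 1 -> cE f x = f x.
Proof. intros; unfold cE; now rewrite clamp_id. Qed.

Lemma cont01_of_cE f : (forall x, continuity_pt (cE f) x) -> cont_on01 f.
Proof.
  intros Hf x Hx eps Heps. destruct (cont_pt_elim _ _ (Hf x) eps Heps) as [d [Hd Hy]].
  exists d; split; [lra|]. intros y Hy01 Hyx. rewrite <- (cE_eq f x), <- (cE_eq f y) by lra. now apply Hy.
Qed.

Lemma cont01_argmax f l r : (forall x, continuity_pt (cE f) x) -> 0 <= l -> l <= r -> r <= 1 ->
  exists t, l <= t <= r /\ forall y, l <= y <= r -> f y <= f t.
Proof.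
  intros Hf Hl Hlr Hr. destruct (continuity_ab_maj (cE f) l r Hlr (fun c _ => Hf c)) as [M [HM HMi]].
  exists M; split; [exact HMi|]. intros y Hy. specialize (HM y Hy).
  rewrite !cE_eq in HM by lra. exact HM.
Qed.

Lemma cont01_argmin f l r : (forall x, continuity_pt (cE f) x) -> 0 <= l -> l <= r -> r <= 1 ->
  exists t, l <= t <= r /\ forall y, l <= y <= r -> f t <= f y.
Proof.
  intros Hf Hl Hlr Hr. destruct (continuity_ab_min (cE f) l r Hlr (fun c _ => Hf c)) as [M [HM HMi]].
  exists M; split; [exact HMi|]. intros y Hy. specialize (HM y Hy).
  rewrite !cE_eq in HM by lra. exact HM.
Qed.

Lemma right_max_deriv g x k del : derivable_pt_lim g x k -> 0 < del ->
  (forall y, x < y < x + del -> g y <= g x) -> k <= 0.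
Proof.
  intros Hd Hdel Hy. destruct (Rle_dec k 0) as [|Hk]; [lra|]. exfalso.
  destruct (Hd (k/2) ltac:(lra)) as [[d Hd0] Hh]. simpl in Hh.
  set (h := Rmin d del / 2).
  assert (Hh0 : 0 < h) by (unfold h, Rmin; destruct Rle_dec; lra).
  assert (Hh1 : h < d) by (unfold h, Rmin; destruct Rle_dec; lra).
  assert (Hh2 : h < del) by (unfold h, Rmin; destruct Rle_dec; lra).
  specialize (Hh h ltac:(lra) ltac:(rewrite Rabs_pos_eq; lra)).
  specialize (Hy (x + h) ltac:(lra)).
  assert (Hq : (g (x + h) - g x) / h <= 0).
  { unfold Rdiv. apply Rmult_le_0_r; [lra|]. left; apply Rinv_0_lt_compat; lra. }
  rabs; lra.
Qed.

Lemma left_max_deriv g x k del : derivable_pt_lim g x k -> 0 < del ->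
  (forall y, x - del < y < x -> g y <= g x) -> 0 <= k.
Proof.
  intros Hd Hdel Hy. destruct (Rle_dec 0 k) as [|Hk]; [lra|]. exfalso.
  destruct (Hd (-k/2) ltac:(lra)) as [[d Hd0] Hh]. simpl in Hh.
  set (h := - (Rmin d del / 2)).
  assert (Hh0 : 0 < - h) by (unfold h, Rmin; destruct Rle_dec; lra).
  assert (Hh1 : - h < d) by (unfold h, Rmin; destruct Rle_dec; lra).
  assert (Hh2 : - h < del) by (unfold h, Rmin; destruct Rle_dec; lra).
  specialize (Hh h ltac:(lra) ltac:(rewrite Rabs_left; lra)).
  specialize (Hy (x + h) ltac:(lra)).
  assert (Hq : 0 <= (g (x + h) - g x) / h).
  { unfold Rdiv. replace ((g (x + h) - g x) * / h) with ((g x - g (x+h)) * / (-h)).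
    - apply Rmult_le_pos; [lra|]. left; apply Rinv_0_lt_compat; lra.
    - field; lra. }
  rabs; lra.
Qed.


Lemma lip_cont g L : 0 <= L -> (forall x y, Rabs (g y - g x) <= L * Rabs (y - x)) -> continuity g.
Proof.
  intros HL Hg x. apply cont_pt_intro. intros eps Heps.
  exists (eps / (L + 1)). split. { apply Rdiv_lt_0_compat; lra. }
  intros y Hy. eapply Rle_lt_trans; [apply Hg|].
  apply Rle_lt_trans with ((L+1) * Rabs (y - x)).
  - pose proof (Rabs_pos (y - x)); nra.
  - apply Rmult_lt_reg_r with (/ (L+1)). { apply Rinv_0_lt_compat; lra. }
    replace ((L + 1) * Rabs (y - x) * / (L + 1)) with (Rabs (y - x)) by (field; lra).
    exact Hy.
Qed.

Lemma Rmax0_lip a b : Rabs (Rmax 0 b - Rmax 0 a) <= 1 * Rabs (b - a).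
Proof. unfold Rmax; repeat destruct Rle_dec; rabs; lra. Qed.

Lemma cE_minus v g : (forall x, continuity_pt (cE v) x) -> continuity g ->
  forall x, continuity_pt (cE (fun t => v t - g t)) x.
Proof.
  intros Hv Hg x. apply cont_pt_intro. intros eps Heps.
  destruct (cont_pt_elim _ _ (Hv x) (eps/2) ltac:(lra)) as [d1 [Hd1 H1]].
  destruct (cont_pt_elim _ _ (Hg (clamp x)) (eps/2) ltac:(lra)) as [d2 [Hd2 H2]].
  exists (Rmin d1 d2). split. { unfold Rmin; destruct Rle_dec; lra. }
  intros y Hy. unfold cE in *.
  assert (A1 : Rabs (y - x) < d1) by (unfold Rmin in Hy; destruct Rle_dec; lra).
  assert (A2 : Rabs (clamp y - clamp x) < d2).
  { pose proof (clamp_lip x y). unfold Rmin in Hy; destruct Rle_dec; lra. }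
  specialize (H1 y A1). specialize (H2 (clamp y) A2). rabs; lra.
Qed.

Definition sqp m t := Rmax 0 (t - m) * Rmax 0 (t - m).
Definition sqn m t := Rmax 0 (m - t) * Rmax 0 (m - t).

Lemma deriv_from_bound f t D :
  (forall h, Rabs (f (t + h) - f t - D * h) <= h * h) -> derivable_pt_lim f t D.
Proof.
  intros Hb eps Heps. exists (mkposreal eps Heps). intros h Hh0 Hh. simpl in Hh.
  replace ((f (t + h) - f t) / h - D) with ((f (t + h) - f t - D * h) / h) by (field; lra).
  unfold Rdiv. rewrite Rabs_mult, Rabs_inv.
  assert (0 < Rabs h) by (apply Rabs_pos_lt; exact Hh0).
  apply Rle_lt_trans with (Rabs h).
  - apply Rmult_le_reg_r with (Rabs h); [lra|].
    rewrite Rmult_assoc, Rinv_l by lra. rewrite Rmult_1_r.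
    specialize (Hb h). replace (Rabs h * Rabs h) with (h * h); [lra|].
    rewrite <- Rabs_mult. rewrite Rabs_pos_eq; [ring|nra].
  - exact Hh.
Qed.

Lemma sqp_deriv m t : derivable_pt_lim (sqp m) t (2 * Rmax 0 (t - m)).
Proof.
  apply deriv_from_bound. intros h. unfold sqp.
  replace (t + h - m) with ((t - m) + h) by ring. generalize (t - m); intro a.
  unfold Rmax; repeat destruct Rle_dec; rabs; nra.
Qed.

Lemma sqn_deriv m t : derivable_pt_lim (sqn m) t (- (2 * Rmax 0 (m - t))).
Proof.
  apply deriv_from_bound. intros h. unfold sqn.
  replace (m - (t + h)) with ((m - t) - h) by ring. generalize (m - t); intro a.
  unfold Rmax; repeat destruct Rle_dec; rabs; nra.
Qed.

Lemma deriv_lin f t df c K : derivable_pt_lim f t df ->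
  derivable_pt_lim (fun s => c * s + K * f s) t (c + K * df).
Proof.
  intros Hf.
  assert (H1 : derivable_pt_lim (fun s => c * s) t c).
  { pose proof (derivable_pt_lim_scal id c t 1 (derivable_pt_lim_id t)) as E.
    rewrite Rmult_1_r in E. exact E. }
  exact (derivable_pt_lim_plus (fun s => c * s) (fun s => K * f s) t c (K * df) H1
           (derivable_pt_lim_scal f K t df Hf)).
Qed.

Lemma mono_dec (v : R -> R) : (forall x, continuity_pt (cE v) x) ->
  (forall t psi dpsi, 0 < t < 1 -> Defs.C1 psi dpsi -> loc_max01 v psi t -> dpsi t <= 0) ->
  forall x y, 0 <= x -> x <= y -> y <= 1 -> v y <= v x.
Proof.
  intros Hv Ht x y Hx Hxy Hy. destruct (Rle_dec (v y) (v x)) as [|Hlt]; [lra|]. exfalso.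
  assert (Hx2 : exists x2, x < x2 < 1 /\ v x < v x2).
  { destruct (Rle_lt_dec 1 y) as [Hy1|Hy1].
    - assert (y = 1) by lra. subst y.
      destruct (cont_pt_elim _ _ (Hv 1) (v 1 - v x) ltac:(lra)) as [d [Hd Hc]].
      assert (x < 1). { destruct (Req_dec x 1); [subst; lra|lra]. }
      set (x2 := Rmax ((x + 1) / 2) (1 - d / 2)).
      assert (E1 : (x + 1) / 2 <= x2) by apply Rmax_l.
      assert (E2 : 1 - d/2 <= x2) by apply Rmax_r.
      assert (E3 : x2 < 1) by (unfold x2, Rmax; destruct Rle_dec; lra).
      exists x2; split; [lra|].
      specialize (Hc x2 ltac:(rabs; lra)). rewrite !cE_eq in Hc by lra. rabs; lra.
    - exists y. split; [|lra]. split; [|lra]. destruct (Req_dec x y); [subst; lra|lra]. }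
  destruct Hx2 as [x2 [[Hxx2 Hx21] Hvx2]].
  set (x3 := (x2 + 1) / 2).
  set (d := v x2 - v x).
  set (c := d / (2 * (x2 - x))).
  set (K := (Rabs (v x3 - v x2) + 1) / ((x3 - x2) * (x3 - x2))).
  assert (Hc : 0 < c) by (unfold c, d; apply Rdiv_lt_0_compat; lra).
  assert (HK : 0 < K).
  { unfold K. apply Rdiv_lt_0_compat. pose proof (Rabs_pos (v x3 - v x2)); lra.
    unfold x3; nra. }
  set (psi := fun s => c * s + K * sqp x2 s).
  set (dpsi := fun s => c + K * (2 * Rmax 0 (s - x2))).
  assert (HC1 : Defs.C1 psi dpsi).
  { split.
    - intro s. apply deriv_lin. apply sqp_deriv.
    - apply (lip_cont _ (2 * K)); [lra|]. intros s1 s2. unfold dpsi.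
      pose proof (Rmax0_lip (s1 - x2) (s2 - x2)).
      replace (c + K * (2 * Rmax 0 (s2 - x2)) - (c + K * (2 * Rmax 0 (s1 - x2))))
        with ((2 * K) * (Rmax 0 (s2 - x2) - Rmax 0 (s1 - x2))) by ring.
      rewrite Rabs_mult, (Rabs_pos_eq (2*K)) by lra.
      replace (s2 - x2 - (s1 - x2)) with (s2 - s1) in H by ring.
      apply Rmult_le_compat_l; lra. }
  assert (Hcont : forall z, continuity_pt (cE (fun t => v t - psi t)) z).
  { apply cE_minus; [exact Hv|]. intro z. apply derivable_continuous_pt.
    exists (dpsi z). apply (proj1 HC1). }
  destruct (cont01_argmax (fun t => v t - psi t) x x3 Hcont Hx ltac:(unfold x3; lra) ltac:(unfold x3; lra))
    as [ts [Hts Hmax]].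
  assert (P1 : v x - psi x < v x2 - psi x2).
  { unfold psi, sqp. replace (Rmax 0 (x - x2)) with 0 by (unfold Rmax; destruct Rle_dec; lra).
    replace (Rmax 0 (x2 - x2)) with 0 by (unfold Rmax; destruct Rle_dec; lra).
    assert (c * (x2 - x) = d / 2) by (unfold c; field; lra). unfold d in *. nra. }
  assert (P3 : v x3 - psi x3 < v x2 - psi x2).
  { unfold psi, sqp. replace (Rmax 0 (x3 - x2)) with (x3 - x2) by (unfold Rmax, x3; destruct Rle_dec; lra).
    replace (Rmax 0 (x2 - x2)) with 0 by (unfold Rmax; destruct Rle_dec; lra).
    assert (E : K * ((x3 - x2) * (x3 - x2)) = Rabs (v x3 - v x2) + 1).
    { unfold K. field. unfold x3; nra. }
    assert (x2 < x3) by (unfold x3; lra). rabs; nra. }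
  assert (Hm2 := Hmax x2 ltac:(unfold x3; lra)).
  assert (Hts1 : x < ts). { destruct (Req_dec ts x); [subst; lra|lra]. }
  assert (Hts2 : ts < x3). { destruct (Req_dec ts x3); [rewrite H in Hm2; lra|lra]. }
  assert (Hloc : loc_max01 v psi ts).
  { exists (Rmin (ts - x) (x3 - ts)). split. { unfold Rmin; destruct Rle_dec; lra. }
    intros z Hz Hzt. apply Hmax. unfold Rmin in Hzt; destruct Rle_dec; rabs; lra. }
  assert (Hts01 : 0 < ts < 1) by (unfold x3 in *; lra).
  specialize (Ht ts psi dpsi Hts01 HC1 Hloc). unfold dpsi in Ht.
  assert (0 <= Rmax 0 (ts - x2)) by apply Rmax_l. nra.
Qed.

Lemma mono_inc (v : R -> R) : (forall x, continuity_pt (cE v) x) ->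
  (forall t psi dpsi, 0 < t < 1 -> Defs.C1 psi dpsi -> loc_max01 v psi t -> 0 <= dpsi t) ->
  forall x y, 0 <= x -> x <= y -> y <= 1 -> v x <= v y.
Proof.
  intros Hv Ht x y Hx Hxy Hy. destruct (Rle_dec (v x) (v y)) as [|Hlt]; [lra|]. exfalso.
  assert (Hx1 : exists x1, 0 < x1 < y /\ v y < v x1).
  { destruct (Rle_lt_dec x 0) as [Hx0|Hx0].
    - assert (x = 0) by lra. subst x.
      destruct (cont_pt_elim _ _ (Hv 0) (v 0 - v y) ltac:(lra)) as [d [Hd Hc]].
      assert (0 < y). { destruct (Req_dec y 0); [subst; lra|lra]. }
      set (x1 := Rmin (y / 2) (d / 2)).
      assert (E1 : x1 <= y/2) by apply Rmin_l.
      assert (E2 : x1 <= d/2) by apply Rmin_r.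
      assert (E3 : 0 < x1) by (unfold x1, Rmin; destruct Rle_dec; lra).
      exists x1; split; [lra|].
      specialize (Hc x1 ltac:(rabs; lra)). rewrite !cE_eq in Hc by lra. rabs; lra.
    - exists x. split; [|lra]. split; [lra|]. destruct (Req_dec x y); [subst; lra|lra]. }
  destruct Hx1 as [x1 [[Hx10 Hx1y] Hvx1]].
  set (x0 := x1 / 2).
  set (d := v x1 - v y).
  set (c := d / (2 * (y - x1))).
  set (K := (Rabs (v x0 - v x1) + 1) / ((x1 - x0) * (x1 - x0))).
  assert (Hc : 0 < c) by (unfold c, d; apply Rdiv_lt_0_compat; lra).
  assert (HK : 0 < K).
  { unfold K. apply Rdiv_lt_0_compat. pose proof (Rabs_pos (v x0 - v x1)); lra.
    unfold x0; nra. }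
  set (psi := fun s => (- c) * s + K * sqn x1 s).
  set (dpsi := fun s => - c + K * (- (2 * Rmax 0 (x1 - s)))).
  assert (HC1 : Defs.C1 psi dpsi).
  { split.
    - intro s. apply deriv_lin. apply sqn_deriv.
    - apply (lip_cont _ (2 * K)); [lra|]. intros s1 s2. unfold dpsi.
      pose proof (Rmax0_lip (x1 - s1) (x1 - s2)).
      replace (- c + K * (- (2 * Rmax 0 (x1 - s2))) - (- c + K * (- (2 * Rmax 0 (x1 - s1)))))
        with (- (2 * K) * (Rmax 0 (x1 - s2) - Rmax 0 (x1 - s1))) by ring.
      rewrite Rabs_mult, Rabs_Ropp, (Rabs_pos_eq (2*K)) by lra.
      replace (x1 - s2 - (x1 - s1)) with (- (s2 - s1)) in H by ring. rewrite Rabs_Ropp in H.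
      apply Rmult_le_compat_l; lra. }
  assert (Hcont : forall z, continuity_pt (cE (fun t => v t - psi t)) z).
  { apply cE_minus; [exact Hv|]. intro z. apply derivable_continuous_pt.
    exists (dpsi z). apply (proj1 HC1). }
  destruct (cont01_argmax (fun t => v t - psi t) x0 y Hcont ltac:(unfold x0; lra) ltac:(unfold x0; lra) Hy)
    as [ts [Hts Hmax]].
  assert (P1 : v y - psi y < v x1 - psi x1).
  { unfold psi, sqn. replace (Rmax 0 (x1 - y)) with 0 by (unfold Rmax; destruct Rle_dec; lra).
    replace (Rmax 0 (x1 - x1)) with 0 by (unfold Rmax; destruct Rle_dec; lra).
    assert (c * (y - x1) = d / 2) by (unfold c; field; lra). unfold d in *. nra. }
  assert (P3 : v x0 - psi x0 < v x1 - psi x1).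
  { unfold psi, sqn. replace (Rmax 0 (x1 - x0)) with (x1 - x0) by (unfold Rmax, x0; destruct Rle_dec; lra).
    replace (Rmax 0 (x1 - x1)) with 0 by (unfold Rmax; destruct Rle_dec; lra).
    assert (E : K * ((x1 - x0) * (x1 - x0)) = Rabs (v x0 - v x1) + 1).
    { unfold K. field. unfold x0; nra. }
    assert (x0 < x1) by (unfold x0; lra). rabs; nra. }
  assert (Hm2 := Hmax x1 ltac:(unfold x0; lra)).
  assert (Hts1 : x0 < ts). { destruct (Req_dec ts x0); [rewrite H in Hm2; lra|lra]. }
  assert (Hts2 : ts < y). { destruct (Req_dec ts y); [rewrite H in Hm2; lra|lra]. }
  assert (Hloc : loc_max01 v psi ts).
  { exists (Rmin (ts - x0) (y - ts)). split. { unfold Rmin; destruct Rle_dec; lra. }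
    intros z Hz Hzt. apply Hmax. unfold Rmin in Hzt; destruct Rle_dec; rabs; lra. }
  assert (Hts01 : 0 < ts < 1) by (unfold x0 in *; lra).
  specialize (Ht ts psi dpsi Hts01 HC1 Hloc). unfold dpsi in Ht.
  assert (0 <= Rmax 0 (x1 - ts)) by apply Rmax_l. nra.
Qed.


Definition Good (H : R -> R -> R) a (sm sp : R -> R) :=
  cont_on_strip H /\ quasiconvex H /\ forall s, 0 <= s <= 1 ->
    H s (sm s) = a /\ H s (sp s) = a /\ sm s <= sp s /\
    (forall p, H s p <= a <-> sm s <= p <= sp s) /\
    (forall p, H s p < a <-> sm s < p < sp s).

Lemma qc_between H s b x y z : quasiconvex H -> 0 <= s <= 1 -> H s x <= b -> H s y <= b ->
  x <= z <= y -> H s z <= b.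
Proof.
  intros Hq Hs Hx Hy Hz. destruct (Req_dec x y) as [<-|Hne].
  - replace z with x by lra. exact Hx.
  - set (t := (y - z) / (y - x)).
    assert (E : t * x + (1 - t) * y = z) by (unfold t; field; lra).
    rewrite <- E. apply Hq; try assumption.
    unfold t; split.
    + apply Rdiv_le_0_compat; lra.
    + apply Rmult_le_reg_r with (y - x); [lra|]. unfold Rdiv.
      rewrite Rmult_assoc, Rinv_l by lra. lra.
Qed.

Lemma Hp_cont H s c : cont_on_strip H -> 0 <= s <= 1 -> continuity (fun r => H s r - c).
Proof.
  intros Hc Hs p. apply cont_pt_intro. intros eps Heps.
  destruct (Hc s p Hs eps Heps) as [d [Hd Hy]]. exists d; split; [lra|].
  intros y Hyp. replace (H s y - c - (H s p - c)) with (H s y - H s p) by ring.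
  apply Hy; [lra| |exact Hyp]. rewrite Rminus_diag, Rabs_R0; lra.
Qed.

Lemma Hp_cont' H s c : cont_on_strip H -> 0 <= s <= 1 -> continuity (fun r => c - H s r).
Proof.
  intros Hc Hs p. apply cont_pt_intro. intros eps Heps.
  destruct (Hc s p Hs eps Heps) as [d [Hd Hy]]. exists d; split; [lra|].
  intros y Hyp. replace (c - H s y - (c - H s p)) with (- (H s y - H s p)) by ring.
  rewrite Rabs_Ropp. apply Hy; [lra| |exact Hyp]. rewrite Rminus_diag, Rabs_R0; lra.
Qed.

Lemma le_sp H a s sp p : cont_on_strip H -> coercive H -> 0 <= s <= 1 ->
  is_max_of (fun q => H s q = a) sp -> H s p <= a -> p <= sp.
Proof.
  intros Hc Hco Hs [_ Hm] Hp. destruct (Req_dec (H s p) a) as [E|Ne]; [now apply Hm|].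
  destruct (Hco a) as [K HK].
  set (q := Rmax p K + 1).
  assert (Hq1 : p < q) by (unfold q; pose proof (Rmax_l p K); lra).
  assert (Hq2 : a < H s q) by (apply HK; [exact Hs|]; unfold q; pose proof (Rmax_r p K);
                                rabs; lra).
  destruct (IVT (fun r => H s r - a) p q (Hp_cont H s a Hc Hs) Hq1 ltac:(lra) ltac:(lra)) as [z [Hz Ez]].
  assert (z <= sp) by (apply Hm; lra). lra.
Qed.

Lemma ge_sm H a s sm p : cont_on_strip H -> coercive H -> 0 <= s <= 1 ->
  is_min_of (fun q => H s q = a) sm -> H s p <= a -> sm <= p.
Proof.
  intros Hc Hco Hs [_ Hm] Hp. destruct (Req_dec (H s p) a) as [E|Ne]; [now apply Hm|].
  destruct (Hco a) as [K HK].
  set (q := Rmin p (- K) - 1).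
  assert (Hq1 : q < p) by (unfold q; pose proof (Rmin_l p (-K)); lra).
  assert (Hq2 : a < H s q) by (apply HK; [exact Hs|]; unfold q; pose proof (Rmin_r p (-K));
                                rabs; lra).
  destruct (IVT (fun r => a - H s r) q p (Hp_cont' H s a Hc Hs) Hq1 ltac:(lra) ltac:(lra)) as [z [Hz Ez]].
  assert (sm <= z) by (apply Hm; lra). lra.
Qed.

Lemma good_of H a sm sp : cont_on_strip H -> coercive H -> quasiconvex H ->
  (forall s b p, 0 <= s <= 1 -> (interior (fun q => H s q <= b) p <-> H s p < b)) ->
  (forall s, 0 <= s <= 1 -> is_max_of (fun p => H s p = a) (sp s)) ->
  (forall s, 0 <= s <= 1 -> is_min_of (fun p => H s p = a) (sm s)) ->
  Good H a sm sp.
Proof.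
  intros Hc Hco Hq Hint Hsp Hsm. split; [exact Hc|]. split; [exact Hq|].
  intros s Hs.
  pose proof (Hsp s Hs) as [E1 M1]. pose proof (Hsm s Hs) as [E2 M2].
  assert (Hle : sm s <= sp s) by (apply M2; exact E1).
  assert (G2 : forall p, H s p <= a <-> sm s <= p <= sp s).
  { intro p; split.
    - intro Hp. split; [eapply ge_sm; eauto|eapply le_sp; eauto].
    - intros Hp. apply (qc_between H s a (sm s) (sp s) p Hq Hs); lra. }
  do 4 (split; [auto|]).
  intro p; split.
  - intro Hp. apply (Hint s a p Hs) in Hp. destruct Hp as [[d Hd] Hin]. simpl in Hin.
    unfold included, disc in Hin; simpl in Hin.
    assert (A1 := Hin (p + d/2) ltac:(rabs; lra)).
    assert (A2 := Hin (p - d/2) ltac:(rabs; lra)).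
    apply G2 in A1. apply G2 in A2. lra.
  - intro Hp. apply (Hint s a p Hs).
    assert (Hd : 0 < Rmin (p - sm s) (sp s - p)) by (unfold Rmin; destruct Rle_dec; lra).
    exists (mkposreal _ Hd). intros y Hy. unfold disc in Hy; simpl in Hy.
    apply G2. unfold Rmin in Hy; destruct Rle_dec; rabs; lra.
Qed.

Lemma good_refl H a sm sp : Good H a sm sp ->
  Good (fun s p => H s (- p)) a (fun s => - sp s) (fun s => - sm s).
Proof.
  intros [Hc [Hq Hg]]. split; [|split].
  - intros s p Hs eps Heps. destruct (Hc s (-p) Hs eps Heps) as [d [Hd Hy]].
    exists d; split; [lra|]. intros s' p' Hs' H1 H2. apply Hy; auto.
    replace (- p' - - p) with (- (p' - p)) by ring. now rewrite Rabs_Ropp.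
  - intros s b p q t Hs Hp Hq' Ht.
    replace (- (t * p + (1 - t) * q)) with (t * (-p) + (1 - t) * (-q)) by ring.
    now apply Hq.
  - intros s Hs. destruct (Hg s Hs) as [E1 [E2 [Hle [G2 G3]]]].
    rewrite !Ropp_involutive. split; [exact E2|]. split; [exact E1|]. split; [lra|]. split.
    + intro p. rewrite G2. lra.
    + intro p. rewrite G3. lra.
Qed.

Lemma H_near_lt H s0 p c : cont_on_strip H -> 0 <= s0 <= 1 -> H s0 p < c ->
  exists d, 0 < d /\ forall s, 0 <= s <= 1 -> Rabs (s - s0) < d -> H s p < c.
Proof.
  intros Hc Hs Hp. destruct (Hc s0 p Hs (c - H s0 p) ltac:(lra)) as [d [Hd Hy]].
  exists d; split; [lra|]. intros s Hs' Hss. specialize (Hy s p Hs' Hss ltac:(rewrite Rminus_diag, Rabs_R0; lra)).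
  rabs; lra.
Qed.

Lemma H_near_gt H s0 p c : cont_on_strip H -> 0 <= s0 <= 1 -> c < H s0 p ->
  exists d, 0 < d /\ forall s, 0 <= s <= 1 -> Rabs (s - s0) < d -> c < H s p.
Proof.
  intros Hc Hs Hp. destruct (Hc s0 p Hs (H s0 p - c) ltac:(lra)) as [d [Hd Hy]].
  exists d; split; [lra|]. intros s Hs' Hss. specialize (Hy s p Hs' Hss ltac:(rewrite Rminus_diag, Rabs_R0; lra)).
  rabs; lra.
Qed.

Lemma Rmin_pos a b : 0 < a -> 0 < b -> 0 < Rmin a b.
Proof. intros; unfold Rmin; destruct Rle_dec; lra. Qed.

Lemma sp_upper H a sm sp s0 eps : Good H a sm sp -> 0 <= s0 <= 1 -> 0 < eps ->
  exists d, 0 < d /\ forall s, 0 <= s <= 1 -> Rabs (s - s0) < d -> sp s < sp s0 + eps.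
Proof.
  intros [Hc [Hq Hg]] Hs0 Heps. destruct (Hg s0 Hs0) as [E1 [E2 [Hle [G2 G3]]]].
  assert (Hgt : a < H s0 (sp s0 + eps)).
  { destruct (Rlt_le_dec a (H s0 (sp s0 + eps))) as [|Hl]; [assumption|].
    apply G2 in Hl. lra. }
  set (c := (a + H s0 (sp s0 + eps)) / 2).
  destruct (H_near_lt H s0 (sp s0) c Hc Hs0 ltac:(unfold c; lra)) as [d1 [Hd1 N1]].
  destruct (H_near_gt H s0 (sp s0 + eps) c Hc Hs0 ltac:(unfold c; lra)) as [d2 [Hd2 N2]].
  exists (Rmin d1 d2). split; [now apply Rmin_pos|].
  intros s Hs Hss. destruct (Rlt_le_dec (sp s) (sp s0 + eps)) as [|Hge]; [assumption|].
  exfalso.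
  assert (A1 := N1 s Hs ltac:(unfold Rmin in Hss; destruct Rle_dec; lra)).
  assert (A2 := N2 s Hs ltac:(unfold Rmin in Hss; destruct Rle_dec; lra)).
  destruct (Hg s Hs) as [F1 [F2 _]].
  assert (H s (sp s0 + eps) <= c).
  { apply (qc_between H s c (sp s0) (sp s) _ Hq Hs); [lra|unfold c in *; lra|lra]. }
  lra.
Qed.

Lemma sm_lower H a sm sp s0 eps : Good H a sm sp -> 0 <= s0 <= 1 -> 0 < eps ->
  exists d, 0 < d /\ forall s, 0 <= s <= 1 -> Rabs (s - s0) < d -> sm s0 - eps < sm s.
Proof.
  intros Hg Hs0 Heps. destruct (sp_upper _ _ _ _ s0 eps (good_refl _ _ _ _ Hg) Hs0 Heps) as [d [Hd Hy]].
  exists d; split; [exact Hd|]. intros s Hs Hss. specialize (Hy s Hs Hss). simpl in Hy. lra.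
Qed.

Lemma sp_lower H a sm sp s0 eps : Good H a sm sp -> 0 <= s0 <= 1 -> 0 < eps ->
  exists d, 0 < d /\ forall s, 0 <= s <= 1 -> Rabs (s - s0) < d -> sp s0 - eps < sp s.
Proof.
  intros Hgood Hs0 Heps. pose proof Hgood as [Hc [Hq Hg]].
  destruct (Hg s0 Hs0) as [E1 [E2 [Hle [G2 G3]]]].
  destruct (Req_dec (sm s0) (sp s0)) as [Eq|Ne].
  - destruct (sm_lower _ _ _ _ s0 eps Hgood Hs0 Heps) as [d [Hd Hy]].
    exists d; split; [exact Hd|]. intros s Hs Hss. specialize (Hy s Hs Hss).
    destruct (Hg s Hs) as [_ [_ [Hl _]]]. lra.
  - set (q := Rmax ((sm s0 + sp s0) / 2) (sp s0 - eps / 2)).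
    assert (Q1 : (sm s0 + sp s0) / 2 <= q) by apply Rmax_l.
    assert (Q2 : sp s0 - eps / 2 <= q) by apply Rmax_r.
    assert (Q3 : q < sp s0) by (unfold q, Rmax; destruct Rle_dec; lra).
    assert (Hlt : H s0 q < a) by (apply G3; lra).
    destruct (H_near_lt H s0 q a Hc Hs0 Hlt) as [d [Hd Hy]].
    exists d; split; [exact Hd|]. intros s Hs Hss. specialize (Hy s Hs Hss).
    destruct (Hg s Hs) as [_ [_ [_ [_ G3']]]]. apply G3' in Hy. lra.
Qed.

Lemma sm_upper H a sm sp s0 eps : Good H a sm sp -> 0 <= s0 <= 1 -> 0 < eps ->
  exists d, 0 < d /\ forall s, 0 <= s <= 1 -> Rabs (s - s0) < d -> sm s < sm s0 + eps.
Proof.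
  intros Hg Hs0 Heps. destruct (sp_lower _ _ _ _ s0 eps (good_refl _ _ _ _ Hg) Hs0 Heps) as [d [Hd Hy]].
  exists d; split; [exact Hd|]. intros s Hs Hss. specialize (Hy s Hs Hss). simpl in Hy. lra.
Qed.

Lemma cont_sp H a sm sp : Good H a sm sp -> cont_on01 sp.
Proof.
  intros Hg s0 Hs0 eps Heps.
  destruct (sp_upper _ _ _ _ s0 eps Hg Hs0 Heps) as [d1 [Hd1 N1]].
  destruct (sp_lower _ _ _ _ s0 eps Hg Hs0 Heps) as [d2 [Hd2 N2]].
  exists (Rmin d1 d2); split; [now apply Rmin_pos|]. intros s Hs Hss.
  assert (A1 := N1 s Hs ltac:(unfold Rmin in Hss; destruct Rle_dec; lra)).
  assert (A2 := N2 s Hs ltac:(unfold Rmin in Hss; destruct Rle_dec; lra)). rabs; lra.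
Qed.

Lemma cont_sm H a sm sp : Good H a sm sp -> cont_on01 sm.
Proof.
  intros Hg s0 Hs0 eps Heps.
  destruct (sm_upper _ _ _ _ s0 eps Hg Hs0 Heps) as [d1 [Hd1 N1]].
  destruct (sm_lower _ _ _ _ s0 eps Hg Hs0 Heps) as [d2 [Hd2 N2]].
  exists (Rmin d1 d2); split; [now apply Rmin_pos|]. intros s Hs Hss.
  assert (A1 := N1 s Hs ltac:(unfold Rmin in Hss; destruct Rle_dec; lra)).
  assert (A2 := N2 s Hs ltac:(unfold Rmin in Hss; destruct Rle_dec; lra)). rabs; lra.
Qed.


Lemma cont_coq f x : continuity_pt f x -> continuous f x.
Proof. intro H. now apply continuity_pt_filterlim. Qed.

Lemma ex_RInt_cont f a b : (forall x, continuity_pt f x) -> ex_RInt f a b.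
Proof. intros Hf. apply (@ex_RInt_continuous R_CompleteNormedModule). intros z _. apply cont_coq, Hf. Qed.

Definition Prim (f : R -> R) (x : R) : R := RInt f 0 x.

Lemma prim_deriv f : (forall x, continuity_pt f x) -> forall x, derivable_pt_lim (Prim f) x (f x).
Proof.
  intros Hf x. apply is_derive_Reals. unfold Prim.
  apply (is_derive_RInt f (fun b => RInt f 0 b) 0 x).
  - apply filter_forall. intro b. apply (@RInt_correct R_CompleteNormedModule). now apply ex_RInt_cont.
  - now apply cont_coq.
Qed.

Lemma prim_diff f x y : (forall x, continuity_pt f x) -> RInt f x y = Prim f y - Prim f x.
Proof.
  intros Hf. unfold Prim.
  pose proof (RInt_Chasles f 0 x y (ex_RInt_cont f 0 x Hf) (ex_RInt_cont f x y Hf)) as E.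
  simpl in E. unfold plus in E; simpl in E. lra.
Qed.

Lemma prim0 f : Prim f 0 = 0.
Proof. unfold Prim. now rewrite RInt_point. Qed.

Lemma prim_mono f g x y : (forall x, continuity_pt f x) -> (forall x, continuity_pt g x) ->
  (forall t, f t <= g t) -> x <= y -> Prim f y - Prim f x <= Prim g y - Prim g x.
Proof.
  intros Hf Hg Hfg Hxy. rewrite <- !prim_diff by assumption.
  apply RInt_le; auto using ex_RInt_cont.
Qed.

Lemma Rint_eq f g a b : (forall x, continuity_pt g x) -> a <= b ->
  (forall x, a <= x <= b -> f x = g x) -> Rint f a b = RInt g a b.
Proof.
  intros Hg Hab Hfg.
  assert (Hex : ex_RInt f a b).
  { apply (ex_RInt_ext g). intros x Hx. symmetry; apply Hfg.
    rewrite Rmin_left, Rmax_right in Hx by lra. lra. now apply ex_RInt_cont. }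
  assert (E : RInt f a b = RInt g a b).
  { apply RInt_ext. intros x Hx. apply Hfg. rewrite Rmin_left, Rmax_right in Hx by lra. lra. }
  unfold Rint. destruct excluded_middle_informative as [h|h].
  - rewrite <- E. symmetry. apply RInt_Reals.
  - exfalso. apply h. constructor. now apply ex_RInt_Reals_0.
Qed.

Lemma prim_cont f : (forall x, continuity_pt f x) -> forall x, continuity_pt (Prim f) x.
Proof.
  intros Hf x. apply derivable_continuous_pt. exists (f x). now apply prim_deriv.
Qed.


Lemma dpl_add_c f x d c : derivable_pt_lim f x d -> derivable_pt_lim (fun y => c + f y) x d.
Proof.
  intros Hf. pose proof (derivable_pt_lim_plus (fct_cte c) f x 0 d (derivable_pt_lim_const c x) Hf) as E.
  rewrite Rplus_0_l in E. exact E.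
Qed.

Lemma dpl_sub f g x d1 d2 : derivable_pt_lim f x d1 -> derivable_pt_lim g x d2 ->
  derivable_pt_lim (fun y => f y - g y) x (d1 - d2).
Proof. intros Hf Hg. exact (derivable_pt_lim_minus f g x d1 d2 Hf Hg). Qed.

Lemma dpl_add f g x d1 d2 : derivable_pt_lim f x d1 -> derivable_pt_lim g x d2 ->
  derivable_pt_lim (fun y => f y + g y) x (d1 + d2).
Proof. intros Hf Hg. exact (derivable_pt_lim_plus f g x d1 d2 Hf Hg). Qed.

Lemma cp_plus f g x : continuity_pt f x -> continuity_pt g x -> continuity_pt (fun y => f y + g y) x.
Proof. intros Hf Hg. exact (continuity_pt_plus f g x Hf Hg). Qed.
Lemma cp_minus f g x : continuity_pt f x -> continuity_pt g x -> continuity_pt (fun y => f y - g y) x.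
Proof. intros Hf Hg. exact (continuity_pt_minus f g x Hf Hg). Qed.
Lemma cp_mult f g x : continuity_pt f x -> continuity_pt g x -> continuity_pt (fun y => f y * g y) x.
Proof. intros Hf Hg. exact (continuity_pt_mult f g x Hf Hg). Qed.
Lemma cp_comp f g x : continuity_pt g x -> continuity_pt f (g x) -> continuity_pt (fun y => f (g y)) x.
Proof. intros Hg Hf. exact (continuity_pt_comp g f x Hg Hf). Qed.

Lemma cp_Rmin f g x : continuity_pt f x -> continuity_pt g x -> continuity_pt (fun y => Rmin (f y) (g y)) x.
Proof.
  intros Hf Hg. apply cont_pt_intro. intros eps Heps.
  destruct (cont_pt_elim _ _ Hf eps Heps) as [d1 [Hd1 H1]].
  destruct (cont_pt_elim _ _ Hg eps Heps) as [d2 [Hd2 H2]].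
  exists (Rmin d1 d2). split. { unfold Rmin; destruct Rle_dec; lra. }
  intros y Hy. assert (A1 : Rabs (y - x) < d1) by (unfold Rmin in Hy; destruct Rle_dec; lra).
  assert (A2 : Rabs (y - x) < d2) by (unfold Rmin in Hy; destruct Rle_dec; lra).
  specialize (H1 y A1). specialize (H2 y A2). unfold Rmin; repeat destruct Rle_dec; rabs; lra.
Qed.

Lemma h_deriv c r z : 0 < r -> derivable_pt_lim (fun z => ((z - c) - sqrt ((z - c) * (z - c) + r)) / 2) z
   ((1 - (z - c) / sqrt ((z - c) * (z - c) + r)) / 2).
Proof.
  intros Hr. pose proof (Rle_0_sqr (z - c)). unfold Rsqr in *.
  assert (0 < sqrt ((z - c) * (z - c) + r)) by (apply sqrt_lt_R0; lra).
  apply is_derive_Reals. auto_derive.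
  - replace (z + - c) with (z - c) by ring. lra.
  - replace (z + - c) with (z - c) by ring. field. lra.
Qed.

Lemma dh_cont c r : 0 < r -> continuity (fun z => (1 - (z - c) / sqrt ((z - c) * (z - c) + r)) / 2).
Proof.
  intros Hr z. pose proof (Rle_0_sqr (z - c)). unfold Rsqr in *.
  assert (0 < sqrt ((z - c) * (z - c) + r)) by (apply sqrt_lt_R0; lra).
  apply continuity_pt_filterlim.
  apply (ex_derive_continuous (V := R_NormedModule) (fun z0 => (1 - (z0 - c) / sqrt ((z0 - c) * (z0 - c) + r)) / 2) z).
  auto_derive.
  replace (z + - c) with (z - c) by ring. repeat split; lra.
Qed.

Lemma sqrt_ge_abs y r : 0 <= r -> Rabs y <= sqrt (y * y + r).
Proof.
  intros Hr. rewrite <- sqrt_Rsqr_abs. apply sqrt_le_1_alt. unfold Rsqr. nra.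
Qed.

Lemma sqrt_gt_abs y r : 0 < r -> Rabs y < sqrt (y * y + r).
Proof.
  intros Hr. rewrite <- sqrt_Rsqr_abs. apply sqrt_lt_1_alt. unfold Rsqr. split; nra.
Qed.

Lemma exist_part (H : R -> R -> R) a A B P Q al be :
  (forall t, A t <= B t) ->
  (forall x, derivable_pt_lim P x (B x)) -> (forall x, derivable_pt_lim Q x (A x)) ->
  (forall x y, x <= y -> Q y - Q x <= P y - P x) ->
  (forall x p, 0 < x < 1 -> (H x p <= a <-> A x <= p <= B x)) ->
  (forall x p, 0 < x < 1 -> (H x p < a <-> A x < p < B x)) ->
  visc_sub H a (fun s => Rmin (al + P s) (be - Q 1 + Q s)) /\
  visc_super H a (fun s => Rmin (al + P s) (be - Q 1 + Q s)).
Proof.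
  intros hAB hP hQ hD T1 T2. split.
  - intros x phi dphi Hx [Hd Hc] [del [Hdel Hloc]].
    apply T1; [exact Hx|]. split.
    + set (Wx := Rmin (al + P x) (be - Q 1 + Q x)).
      assert (Dg : derivable_pt_lim (fun y => (Wx - Q x + Q y) - phi y) x (A x - dphi x)).
      { apply dpl_sub; [apply dpl_add_c, hQ|apply Hd]. }
      assert (HR := right_max_deriv _ x _ (Rmin del (1 - x)) Dg ltac:(apply Rmin_pos; lra)).
      cut (A x - dphi x <= 0); [lra|]. apply HR. intros y Hy.
      assert (Hy1 : y - x < del) by (pose proof (Rmin_l del (1-x)); lra).
      assert (Hy2 : y < 1) by (pose proof (Rmin_r del (1-x)); lra).
      specialize (Hloc y ltac:(lra) ltac:(rabs; lra)).
      assert (Wle : Wx - Q x + Q y <= Rmin (al + P y) (be - Q 1 + Q y)).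
      { pose proof (Rmin_l (al + P x) (be - Q 1 + Q x)). pose proof (Rmin_r (al + P x) (be - Q 1 + Q x)).
        pose proof (hD x y ltac:(lra)). fold Wx in H0, H1.
        apply Rmin_glb; lra. }
      fold Wx in Hloc. lra.
    + set (Wx := Rmin (al + P x) (be - Q 1 + Q x)).
      assert (Dg : derivable_pt_lim (fun y => (Wx - P x + P y) - phi y) x (B x - dphi x)).
      { apply dpl_sub; [apply dpl_add_c, hP|apply Hd]. }
      assert (HL := left_max_deriv _ x _ (Rmin del x) Dg ltac:(apply Rmin_pos; lra)).
      cut (0 <= B x - dphi x); [lra|]. apply HL. intros y Hy.
      assert (Hy1 : x - y < del) by (pose proof (Rmin_l del x); lra).
      assert (Hy2 : 0 < y) by (pose proof (Rmin_r del x); lra).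
      specialize (Hloc y ltac:(lra) ltac:(rabs; lra)).
      assert (Wle : Wx - P x + P y <= Rmin (al + P y) (be - Q 1 + Q y)).
      { pose proof (Rmin_l (al + P x) (be - Q 1 + Q x)). pose proof (Rmin_r (al + P x) (be - Q 1 + Q x)).
        pose proof (hD y x ltac:(lra)). fold Wx in H0, H1.
        apply Rmin_glb; lra. }
      fold Wx in Hloc. lra.
  - intros x phi dphi Hx [Hd Hc] [del [Hdel Hloc]].
    destruct (Rlt_le_dec (H x (dphi x)) a) as [Hlt|]; [|assumption]. exfalso.
    apply T2 in Hlt; [|exact Hx].
    destruct (Rle_dec (al + P x) (be - Q 1 + Q x)) as [Hfg|Hfg].
    + assert (Dg : derivable_pt_lim (fun y => phi y - (al + P y)) x (dphi x - B x)).
      { apply dpl_sub; [apply Hd|apply dpl_add_c, hP]. }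
      assert (HL := left_max_deriv _ x _ (Rmin del x) Dg ltac:(apply Rmin_pos; lra)).
      cut (0 <= dphi x - B x); [lra|]. apply HL. intros y Hy.
      assert (Hy1 : x - y < del) by (pose proof (Rmin_l del x); lra).
      assert (Hy2 : 0 < y) by (pose proof (Rmin_r del x); lra).
      specialize (Hloc y ltac:(lra) ltac:(rabs; lra)).
      pose proof (hD y x ltac:(lra)).
      rewrite Rmin_left in Hloc by lra. rewrite Rmin_left in Hloc by lra. lra.
    + assert (Dg : derivable_pt_lim (fun y => phi y - (be - Q 1 + Q y)) x (dphi x - A x)).
      { apply dpl_sub; [apply Hd|apply dpl_add_c, hQ]. }
      assert (HR := right_max_deriv _ x _ (Rmin del (1 - x)) Dg ltac:(apply Rmin_pos; lra)).
      cut (dphi x - A x <= 0); [lra|]. apply HR. intros y Hy.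
      assert (Hy1 : y - x < del) by (pose proof (Rmin_l del (1-x)); lra).
      assert (Hy2 : y < 1) by (pose proof (Rmin_r del (1-x)); lra).
      specialize (Hloc y ltac:(lra) ltac:(rabs; lra)).
      pose proof (hD x y ltac:(lra)).
      rewrite Rmin_right in Hloc by lra. rewrite Rmin_right in Hloc by lra. lra.
Qed.

Lemma uniq_part (H : R -> R -> R) a A B P Q al be u :
  (forall t, A t <= B t) -> continuity A -> continuity B ->
  (forall x, derivable_pt_lim P x (B x)) -> (forall x, derivable_pt_lim Q x (A x)) ->
  P 0 = 0 -> Q 0 = 0 ->
  (forall x p, 0 < x < 1 -> (H x p <= a <-> A x <= p <= B x)) ->
  (forall x p, 0 < x < 1 -> (H x p < a <-> A x < p < B x)) ->
  ((forall x y, P y - P x = Q y - Q x) \/ (forall t, 0 < t < 1 -> A t < B t)) ->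
  (forall x, continuity_pt (cE u) x) -> visc_sub H a u -> visc_super H a u ->
  u 0 = al -> u 1 = be ->
  forall s, 0 <= s <= 1 -> u s = Rmin (al + P s) (be - Q 1 + Q s).
Proof.
  intros hAB hA hB hP hQ hP0 hQ0 T1 T2 hDeg hu Hsub Hsup hu0 hu1.
  assert (Pc : continuity P) by (intro x; apply derivable_continuous_pt; exists (B x); apply hP).
  assert (Qc : continuity Q) by (intro x; apply derivable_continuous_pt; exists (A x); apply hQ).
  assert (M1 : forall x y, 0 <= x -> x <= y -> y <= 1 -> u y - P y <= u x - P x).
  { apply (mono_dec (fun t => u t - P t)). { apply cE_minus; assumption. }
    intros t psi dpsi Ht [Hd Hc] [d [Hd' Hl]].
    assert (HC : Defs.C1 (fun y => psi y + P y) (fun y => dpsi y + B y)).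
    { split; [intro y; apply dpl_add; auto|intro y; apply cp_plus; auto]. }
    assert (Hloc : loc_max01 u (fun y => psi y + P y) t).
    { exists d; split; [exact Hd'|]. intros y Hy Hyx. specialize (Hl y Hy Hyx). lra. }
    specialize (Hsub t _ _ Ht HC Hloc). apply T1 in Hsub; [|exact Ht]. simpl in Hsub. lra. }
  assert (M2 : forall x y, 0 <= x -> x <= y -> y <= 1 -> u x - Q x <= u y - Q y).
  { apply (mono_inc (fun t => u t - Q t)). { apply cE_minus; assumption. }
    intros t psi dpsi Ht [Hd Hc] [d [Hd' Hl]].
    assert (HC : Defs.C1 (fun y => psi y + Q y) (fun y => dpsi y + A y)).
    { split; [intro y; apply dpl_add; auto|intro y; apply cp_plus; auto]. }
    assert (Hloc : loc_max01 u (fun y => psi y + Q y) t).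
    { exists d; split; [exact Hd'|]. intros y Hy Hyx. specialize (Hl y Hy Hyx). lra. }
    specialize (Hsub t _ _ Ht HC Hloc). apply T1 in Hsub; [|exact Ht]. simpl in Hsub. lra. }
  intros s Hs.
  assert (Up : u s <= Rmin (al + P s) (be - Q 1 + Q s)).
  { pose proof (M1 0 s ltac:(lra) ltac:(lra) ltac:(lra)). pose proof (M2 s 1 ltac:(lra) ltac:(lra) ltac:(lra)).
    apply Rmin_glb; lra. }
  apply Rle_antisym; [exact Up|].
  destruct hDeg as [hPQ|hnd].
  - pose proof (M1 s 1 ltac:(lra) ltac:(lra) ltac:(lra)). pose proof (hPQ s 1).
    pose proof (Rmin_r (al + P s) (be - Q 1 + Q s)). lra.
  - destruct (Rle_dec (Rmin (al + P s) (be - Q 1 + Q s)) (u s)) as [|Hlt]; [assumption|].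
    exfalso. apply Rnot_le_lt in Hlt.
    pose proof (Rmin_l (al + P s) (be - Q 1 + Q s)) as Ml.
    pose proof (Rmin_r (al + P s) (be - Q 1 + Q s)) as Mr.
    set (m := Rmin (al + P s - u s) (be - Q 1 + Q s - u s)).
    assert (Hm1 : m <= al + P s - u s) by apply Rmin_l.
    assert (Hm2 : m <= be - Q 1 + Q s - u s) by apply Rmin_r.
    assert (Hm : 0 < m) by (apply Rmin_pos; lra).
    set (r := (m / 2) * (m / 2)).
    assert (Hr : 0 < r) by (unfold r; nra).
    assert (Hsr : sqrt r = m / 2) by (unfold r; apply sqrt_square; lra).
    set (c := P s - Q s).
    assert (Ec : c = P s - Q s) by reflexivity.
    set (h := fun z => ((z - c) - sqrt ((z - c) * (z - c) + r)) / 2).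
    set (dh := fun z => (1 - (z - c) / sqrt ((z - c) * (z - c) + r)) / 2).
    assert (hle1 : forall z, h z <= z - c).
    { intro z. unfold h. pose proof (sqrt_ge_abs (z - c) r ltac:(lra)). rabs; lra. }
    assert (hle2 : forall z, h z <= 0).
    { intro z. unfold h. pose proof (sqrt_ge_abs (z - c) r ltac:(lra)). rabs; lra. }
    assert (hc : h c = - (m / 4)).
    { unfold h. replace (c - c) with 0 by ring. replace (0 * 0 + r) with r by ring.
      rewrite Hsr. field. }
    set (psi := fun y => Q y + h (P y - Q y)).
    set (dpsi := fun y => A y + dh (P y - Q y) * (B y - A y)).
    assert (HC : Defs.C1 psi dpsi).
    { split.
      - intro y. unfold psi, dpsi. apply dpl_add; [apply hQ|].
        exact (derivable_pt_lim_comp (fun y => P y - Q y) h y (B y - A y) (dh (P y - Q y))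
                 (dpl_sub _ _ _ _ _ (hP y) (hQ y)) (h_deriv c r _ Hr)).
      - intro y. unfold dpsi. apply cp_plus; [apply hA|]. apply cp_mult.
        + apply (cp_comp dh (fun y => P y - Q y)).
          * apply cp_minus; auto.
          * apply (dh_cont c r Hr).
        + apply cp_minus; auto. }
    assert (Hcont : forall z, continuity_pt (cE (fun t => u t - psi t)) z).
    { apply cE_minus; [exact hu|]. intro z. apply derivable_continuous_pt.
      exists (dpsi z). apply (proj1 HC). }
    destruct (cont01_argmin (fun t => u t - psi t) 0 1 Hcont ltac:(lra) ltac:(lra) ltac:(lra))
      as [ts [Hts Hmin]].
    assert (V0 : u s - psi s < u 0 - psi 0).
    { unfold psi. rewrite hP0, hQ0. fold c. rewrite hc.
      pose proof (hle1 (0 - 0)). lra. }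
    assert (V1 : u s - psi s < u 1 - psi 1).
    { unfold psi. fold c. rewrite hc. pose proof (hle2 (P 1 - Q 1)). lra. }
    assert (Vs := Hmin s Hs).
    assert (Ht0 : 0 < ts). { destruct (Req_dec ts 0) as [E|]; [rewrite E in Vs; lra|lra]. }
    assert (Ht1 : ts < 1). { destruct (Req_dec ts 1) as [E|]; [rewrite E in Vs; lra|lra]. }
    assert (Hloc : loc_min01 u psi ts).
    { exists 1; split; [lra|]. intros y Hy _. apply Hmin. lra. }
    specialize (Hsup ts psi dpsi ltac:(lra) HC Hloc).
    assert (Hin : A ts < dpsi ts < B ts).
    { unfold dpsi, dh. set (z := P ts - Q ts).
      assert (HS := sqrt_gt_abs (z - c) r Hr).
      set (S := sqrt ((z - c) * (z - c) + r)) in *.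
      assert (HS0 : 0 < S) by (pose proof (Rabs_pos (z - c)); lra).
      set (k := (z - c) / S).
      assert (Ek : z - c = k * S) by (unfold k; field; lra).
      assert (Hk : -1 < k < 1) by (rabs; split; nra).
      specialize (hnd ts ltac:(lra)). split; nra. }
    apply T2 in Hin; [lra|lra].
Qed.


Theorem proposition5p2
  (H : R -> R -> R)
  (Hcont : cont_on_strip H)
  (Hcoer : coercive H)
  (Hqc : quasiconvex H)
  (Hint : forall s b p, 0 <= s <= 1 ->
            (interior (fun q => H s q <= b) p <-> H s p < b))
  (mH : R -> R)
  (HmH : forall s, 0 <= s <= 1 -> is_min_value (H s) (mH s))
  (aH : R) (HaH : is_max_on01 mH aH)
  (a : R) (Ha : aH <= a)
  (Hconst : a = aH -> forall s t, 0 <= s <= 1 -> 0 <= t <= 1 -> mH s = mH t)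
  (sigp sigm : R -> R)
  (Hsigp : forall s, 0 <= s <= 1 -> is_max_of (fun p => H s p = a) (sigp s))
  (Hsigm : forall s, 0 <= s <= 1 -> is_min_of (fun p => H s p = a) (sigm s))
  (alpha beta : R)
  (Hab1 : Rint sigm 0 1 <= beta - alpha)
  (Hab2 : beta - alpha <= Rint sigp 0 1) :
  let w := fun s => Rmin (alpha + Rint sigp 0 s) (beta - Rint sigm s 1) in
  (cont_on01 w /\ visc_sol H a w /\ w 0 = alpha /\ w 1 = beta) /\
  (forall u : R -> R,
     cont_on01 u -> visc_sol H a u -> u 0 = alpha -> u 1 = beta ->
     forall s, 0 <= s <= 1 -> u s = w s).
Proof.
  intros w.
  assert (Hgood := good_of H a sigm sigp Hcont Hcoer Hqc Hint Hsigp Hsigm).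
  pose proof (cont_sm _ _ _ _ Hgood) as cA. pose proof (cont_sp _ _ _ _ Hgood) as cB.
  set (A := cE sigm). set (B := cE sigp).
  assert (Ac : continuity A) by exact (cE_cont sigm cA).
  assert (Bc : continuity B) by exact (cE_cont sigp cB).
  assert (hAB : forall t, A t <= B t).
  { intro t. unfold A, B, cE. destruct Hgood as [_ [_ Hg]].
    destruct (Hg (clamp t) (clamp_in t)) as [_ [_ [Hl _]]]. exact Hl. }
  set (P := Prim B). set (Q := Prim A).
  assert (hP : forall x, derivable_pt_lim P x (B x)) by (apply prim_deriv; exact Bc).
  assert (hQ : forall x, derivable_pt_lim Q x (A x)) by (apply prim_deriv; exact Ac).
  assert (hD : forall x y, x <= y -> Q y - Q x <= P y - P x).
  { intros x y Hxy. apply prim_mono; auto. }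
  assert (hP0 : P 0 = 0) by apply prim0.
  assert (hQ0 : Q 0 = 0) by apply prim0.
  assert (T1 : forall x p, 0 < x < 1 -> (H x p <= a <-> A x <= p <= B x)).
  { intros x p Hx. unfold A, B. rewrite !cE_eq by lra. destruct Hgood as [_ [_ Hg]].
    destruct (Hg x ltac:(lra)) as [_ [_ [_ [G2 _]]]]. apply G2. }
  assert (T2 : forall x p, 0 < x < 1 -> (H x p < a <-> A x < p < B x)).
  { intros x p Hx. unfold A, B. rewrite !cE_eq by lra. destruct Hgood as [_ [_ Hg]].
    destruct (Hg x ltac:(lra)) as [_ [_ [_ [_ G3]]]]. apply G3. }
  assert (RP : forall s, 0 <= s <= 1 -> Rint sigp 0 s = P s).
  { intros s Hs. unfold P, Prim. apply Rint_eq; [exact Bc|lra|].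
    intros x Hx. unfold B. rewrite cE_eq by lra. reflexivity. }
  assert (RQ : forall s, 0 <= s <= 1 -> Rint sigm s 1 = Q 1 - Q s).
  { intros s Hs. unfold Q. rewrite <- prim_diff by exact Ac. apply Rint_eq; [exact Ac|lra|].
    intros x Hx. unfold A. rewrite cE_eq by lra. reflexivity. }
  set (W := fun s => Rmin (alpha + P s) (beta - Q 1 + Q s)).
  assert (HW : forall s, 0 <= s <= 1 -> w s = W s).
  { intros s Hs. unfold w, W. rewrite RP, RQ by exact Hs. f_equal. ring. }
  assert (Wc : forall x, continuity_pt W x).
  { intro x. unfold W. apply cp_Rmin; apply cp_plus.
    - apply continuity_pt_const. intros ? ?; reflexivity.
    - apply prim_cont; exact Bc.
    - apply continuity_pt_const. intros ? ?; reflexivity.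
    - apply prim_cont; exact Ac. }
  destruct (exist_part H a A B P Q alpha beta hAB hP hQ hD T1 T2) as [Esub Esup].
  fold W in Esub, Esup.
  split; [split; [|split; [|split]]|].
  - intros x Hx eps Heps. destruct (cont_pt_elim _ _ (Wc x) eps Heps) as [d [Hd Hy]].
    exists d; split; [exact Hd|]. intros y Hy01 Hyx. rewrite !HW by lra. now apply Hy.
  - split; [|split].
    + intros x Hx. apply cont_pt_intro. intros eps Heps.
      destruct (cont_pt_elim _ _ (Wc x) eps Heps) as [d [Hd Hy]].
      exists (Rmin d (Rmin x (1 - x))). split. { apply Rmin_pos; [lra|apply Rmin_pos; lra]. }
      intros y Hyx. pose proof (Rmin_l d (Rmin x (1 - x))). pose proof (Rmin_r d (Rmin x (1 - x))).
      pose proof (Rmin_l x (1 - x)). pose proof (Rmin_r x (1 - x)).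
      rewrite !HW by (rabs; lra). apply Hy. lra.
    + intros x phi dphi Hx HC [d [Hd Hl]]. apply (Esub x phi dphi Hx HC).
      exists d; split; [exact Hd|]. intros y Hy Hyx. rewrite <- !HW by lra. now apply Hl.
    + intros x phi dphi Hx HC [d [Hd Hl]]. apply (Esup x phi dphi Hx HC).
      exists d; split; [exact Hd|]. intros y Hy Hyx. rewrite <- !HW by lra. now apply Hl.
  - rewrite HW by lra. unfold W. rewrite hP0, hQ0.
    assert (E := RQ 0 ltac:(lra)). rewrite hQ0 in E.
    rewrite Rmin_left; lra.
  - rewrite HW by lra. unfold W.
    assert (E := RP 1 ltac:(lra)).
    rewrite Rmin_right; lra.
  - intros u Hu [Huc [Hus Husp]] Hu0 Hu1 s Hs. rewrite HW by exact Hs.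
    apply (uniq_part H a A B P Q alpha beta u hAB Ac Bc hP hQ hP0 hQ0 T1 T2); auto.
    + destruct (Rle_lt_dec a aH) as [Hle|Hlt].
      * left.
        assert (Eq : forall t, A t = B t).
        { intro t. unfold A, B, cE. set (s0 := clamp t). assert (Hs0 := clamp_in t). fold s0 in Hs0.
          destruct Hgood as [_ [_ Hg]]. destruct (Hg s0 Hs0) as [_ [_ [Hl [_ G3]]]].
          destruct (Req_dec (sigm s0) (sigp s0)) as [|Ne]; [assumption|]. exfalso.
          assert (Hm : H s0 ((sigm s0 + sigp s0) / 2) < a) by (apply G3; lra).
          destruct (HmH s0 Hs0) as [_ Hmin].
          specialize (Hmin ((sigm s0 + sigp s0) / 2)).
          destruct HaH as [[s1 [Hs1 Es1]] _].
          assert (E := Hconst ltac:(lra) s0 s1 Hs0 Hs1). lra. }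
        intros x y. unfold P, Q. rewrite <- !prim_diff by assumption.
        apply RInt_ext. intros z _. symmetry. apply Eq.
      * right. intros t Ht. destruct (HmH t ltac:(lra)) as [[p Ep] _].
        destruct HaH as [_ Hmax]. specialize (Hmax t ltac:(lra)).
        assert (Hp : H t p < a) by lra. apply T2 in Hp; [lra|exact Ht].
    + exact (cE_cont u Hu).
Qed.
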